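(* Let $\mathbf{u}=(u_1,u_2)\in\mathbb{R}[x_1,x_2]_d^2$ and $p\in\Sigma[x_1,x_2]_{2d}$, and suppose $\nabla f_p(\mathbf{u})=0$. If $p\in\operatorname{im}(\mathcal{A}_{\mathbf{u}})$, where $\mathcal{A}_{\mathbf{u}}:\mathbb{R}[x_1,x_2]_d^2\to\mathbb{R}[x_1,x_2]_{2d}$, $(v_1,v_2)\mapsto u_1v_1+u_2v_2$, then $f_p(\mathbf{u})=0$.
   Context: $\mathbb{R}[x_1,x_2]_n$ denotes the space of real binary forms (homogeneous polynomials in $x_1,x_2$) of degree $n$, and $\Sigma[x_1,x_2]_{2d}\subseteq\mathbb{R}[x_1,x_2]_{2d}$ the cone of sums of squares of binary forms of degree $d$. Fix any inner product $\langle\cdot,\cdot\rangle$ on $\mathbb{R}[x_1,x_2]_{2d}$ with induced norm $\|\cdot\|$, and let $f_p(\mathbf{u})=\|u_1^2+u_2^2-p\|^2$ for $\mathbf{u}\in\mathbb{R}[x_1,x_2]_d^2$. The gradient is taken with respect to the finite-dimensional real vector space $\mathbb{R}[x_1,x_2]_d^2$; $\nabla f_p(\mathbf{u})=0$ is equivalent to $\langle u_1v_1+u_2v_2,\,u_1^2+u_2^2-p\rangle=0$ for all $(v_1,v_2)\in\mathbb{R}[x_1,x_2]_d^2$. *)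

(* Defs.v *)
From HB Require Import structures.
From mathcomp Require Import all_boot all_order all_algebra.
From mathcomp Require Import all_classical all_reals all_analysis.
From mathcomp Require mpoly.
Import (canonicals, coercions, hints) mpoly.
Set Implicit Arguments. Unset Strict Implicit. Unset Printing Implicit Defensive.
Import Order.TTheory GRing.Theory Num.Theory.
Local Open Scope ring_scope.

Notation bipoly R := (mpoly.mpoly 2 R).

(* [is_form n p] : p is a binary form of degree n, i.e. p \in R[x1,x2]_n
   (homogeneous of total degree n; the zero polynomial included). *)
Definition is_form (R : realType) (n : nat) (p : bipoly R) : Prop :=
  p \in mpoly.ishomog1 n mpoly.mdeg.

(* [ip] is an inner product on the real vector space R[x1,x2]_n:
   symmetric, linear in the first argument, positive definite
   (only its values on forms of degree n matter). *)
Definition is_inner_product (R : realType) (n : nat)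
    (ip : bipoly R -> bipoly R -> R) : Prop :=
  [/\ (forall p q : bipoly R, is_form n p -> is_form n q -> ip p q = ip q p),
      (forall (a : R) (p q r : bipoly R), is_form n p -> is_form n q -> is_form n r ->
          ip (a *: p + q) r = a * ip p r + ip q r)
    & (forall p : bipoly R, is_form n p -> p != 0 -> 0 < ip p p)].

Definition ipnorm (R : realType) (ip : bipoly R -> bipoly R -> R)
    (p : bipoly R) : R := Num.sqrt (ip p p).

Definition f_p (R : realType) (ip : bipoly R -> bipoly R -> R)
    (p : bipoly R) (u : bipoly R * bipoly R) : R :=
  ipnorm ip (u.1 ^+ 2 + u.2 ^+ 2 - p) ^+ 2.

(* grad f_p(u) = 0, the gradient being taken on the finite-dimensional space
   R[x1,x2]_d^2: f_p is differentiable at u along every direction (v1,v2) of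
   that space, with zero directional derivative. *)
Definition grad_f_p_zero (R : realType) (d : nat)
    (ip : bipoly R -> bipoly R -> R) (p : bipoly R)
    (u : bipoly R * bipoly R) : Prop :=
  forall v1 v2 : bipoly R, is_form d v1 -> is_form d v2 ->
    is_derive (0 : R) (1 : R)
      (fun t : R => f_p ip p (u.1 + t *: v1, u.2 + t *: v2)) 0.

Definition is_sos (R : realType) (d : nat) (p : bipoly R) : Prop :=
  exists s : seq (bipoly R),
    (forall q, q \in s -> is_form d q) /\ p = \sum_(q <- s) q ^+ 2.

Definition A_u (R : realType) (u : bipoly R * bipoly R) (v : bipoly R * bipoly R)
  : bipoly R := u.1 * v.1 + u.2 * v.2.

Definition in_im_A_u (R : realType) (d : nat) (u : bipoly R * bipoly R)
    (p : bipoly R) : Prop :=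
  exists v1 v2 : bipoly R, [/\ is_form d v1, is_form d v2 & p = A_u u (v1, v2)].

(* Main.v *)
Require Import Defs.
From HB Require Import structures.
From mathcomp Require Import all_boot all_order all_algebra.
From mathcomp Require Import all_classical all_reals all_analysis.
From mathcomp Require mpoly.
From mathcomp Require Import ring.
Import (canonicals, coercions, hints) mpoly.
Import Order.TTheory GRing.Theory Num.Theory.
Local Open Scope ring_scope.
Lemma der_poly (R : realType) (c0 c1 c2 c3 c4 : R) :
  'D_1 (fun t : R => c0 + t * (c1 + t * (c2 + t * (c3 + t * c4)))) 0 = c1.
Proof.
set k := (cst c1 + id * (cst c2 + id * (cst c3 + id * cst c4)) : R -> R).
have -> : (fun t : R => c0 + t * (c1 + t * (c2 + t * (c3 + t * c4)))) = cst c0 + id * k.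
  by apply/funext => t.
rewrite derive_val.
rewrite /=.
rewrite !(scale0r, add0r) /k !fctE mul0r addr0; exact: mulr1. Qed.

Section IP.
Variables (R : realType) (n : nat) (ip : bipoly R -> bipoly R -> R).
Hypothesis Hip : is_inner_product n ip.

Lemma form0 : is_form n (0 : bipoly R).
Proof. exact: rpred0. Qed.

Lemma ipDl p q r : is_form n p -> is_form n q -> is_form n r ->
  ip (p + q) r = ip p r + ip q r.
Proof. case: Hip => _ L _ Hp Hq Hr; by have := L 1 p q r Hp Hq Hr; rewrite scale1r mul1r. Qed.

Lemma ip0l r : is_form n r -> ip 0 r = 0.
Proof.
move=> Hr; have := @ipDl 0 0 r form0 form0 Hr; rewrite addr0 => h.
by apply: (addrI (ip 0 r)); rewrite addr0 -h.
Qed.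

Lemma ipZl a p r : is_form n p -> is_form n r -> ip (a *: p) r = a * ip p r.
Proof.
case: Hip => _ L _ Hp Hr; have := L a p 0 r Hp form0 Hr.
by rewrite addr0 ip0l // addr0.
Qed.

Lemma ipS p q : is_form n p -> is_form n q -> ip p q = ip q p.
Proof. by case: Hip => S _ _; apply: S. Qed.

Lemma ip_ge0 p : is_form n p -> 0 <= ip p p.
Proof.
case: Hip => _ _ P Hp; have [->|nz] := eqVneq p 0; first by rewrite ip0l //; exact: form0.
exact/ltW/P.
Qed.

Lemma der_ip r a b : is_form n r -> is_form n a -> is_form n b ->
  is_derive (0:R) (1:R) (fun t : R => ipnorm ip (r + t *: a + t^+2 *: b) ^+ 2) 0 ->
  ip a r = 0.
Proof.
move=> Hr Ha Hb H; have := @derive_val _ _ _ _ _ _ _ H; clear H.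
have F t : is_form n (r + t *: a + t^+2 *: b) by rewrite /is_form !rpredD ?rpredZ.
have -> : (fun t : R => ipnorm ip (r + t *: a + t^+2 *: b) ^+ 2) =
  (fun t => ip r r + t * (2 * ip a r + t * ((ip a a + 2 * ip b r) + t * (2 * ip a b + t * ip b b)))).
  apply/funext => t; rewrite /ipnorm sqr_sqrtr ?ip_ge0 //.
  rewrite !ipDl; try by rewrite /is_form ?(rpredD, rpredZ).
  rewrite !ipZl; try by rewrite /is_form ?(rpredD, rpredZ).
  rewrite [ip r _]ipS ?F // [ip a _]ipS ?F // [ip b _]ipS ?F //.
  rewrite !ipDl; try by rewrite /is_form ?(rpredD, rpredZ).
  rewrite !ipZl; try by rewrite /is_form ?(rpredD, rpredZ).
  rewrite [ip r a]ipS // [ip r b]ipS // [ip a b]ipS //.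
  ring.
by rewrite der_poly => /eqP; rewrite mulf_eq0 pnatr_eq0 /= => /eqP.
Qed.
End IP.

Theorem proposition4p1 (R : realType) (d : nat)
    (ip : bipoly R -> bipoly R -> R) (u1 u2 p : bipoly R) :
  is_inner_product (2 * d) ip ->
  is_form d u1 -> is_form d u2 ->
  is_sos d p ->
  grad_f_p_zero d ip p (u1, u2) ->
  in_im_A_u d (u1, u2) p ->
  f_p ip p (u1, u2) = 0.
Proof.
move=> Hip Hu1 Hu2 _ Hg [w1 [w2 [Hw1 Hw2 Ep]]].
have FM (x y : bipoly R) : is_form d x -> is_form d y -> is_form (2*d) (x*y).
  by rewrite /is_form mul2n -addnn; apply: mpoly.dhomogM.
have Fp : is_form (2*d) p by rewrite Ep /A_u /= /is_form rpredD //; apply: FM.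
set r := u1 ^+ 2 + u2 ^+ 2 - p.
have FS : is_form (2*d) (u1 ^+ 2 + u2 ^+ 2) by rewrite /is_form rpredD // expr2; apply: FM.
have Fr : is_form (2*d) r by rewrite /r /is_form rpredB.
have key v1 v2 : is_form d v1 -> is_form d v2 -> ip (u1 * v1 + u2 * v2) r = 0.
  move=> H1 H2; have := Hg v1 v2 H1 H2; rewrite /f_p /=.
  have Fa : is_form (2*d) (u1 * v1 + u2 * v2) by rewrite /is_form rpredD //; apply: FM.
  have E : (fun t : R => ipnorm ip ((u1 + t *: v1) ^+ 2 + (u2 + t *: v2) ^+ 2 - p) ^+ 2)
    = (fun t => ipnorm ip (r + t *: (2%:R *: (u1*v1+u2*v2)) + t^+2 *: (v1^+2+v2^+2)) ^+ 2).
    apply/funext => t; congr (_ ^+ 2); congr (ipnorm ip _).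
    rewrite /r scaler_nat [t ^+ 2]expr2 -scalerA -[t *: (t *: _)]mulr_algl -[t *: (v1 ^+ 2 + _)]mulr_algl -[t *: (_ *+ 2)]mulr_algl -[t *: v1]mulr_algl -[t *: v2]mulr_algl. move: (t%:A) => T; ring.
  have Fb : is_form (2*d) (v1^+2+v2^+2) by rewrite /is_form rpredD // expr2; apply: FM.
  have Fa2 : is_form (2*d) (2%:R *: (u1*v1+u2*v2)) by rewrite /is_form rpredZ.
  rewrite E => /(@der_ip _ _ _ Hip _ _ _ Fr Fa2 Fb).
  rewrite (@ipZl _ _ _ Hip) // => /eqP; rewrite mulf_eq0 pnatr_eq0 /=.
  by move/eqP.
have h1 := key u1 u2 Hu1 Hu2.
have h2 : ip p r = 0 by rewrite {1}Ep; exact: key.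
rewrite /f_p /ipnorm /= sqr_sqrtr; last exact: (@ip_ge0 _ _ _ Hip).
have -> : ip r r = ip (u1 ^+ 2 + u2 ^+ 2 + (-1) *: p) r by rewrite scaleN1r.
rewrite (@ipDl _ _ _ Hip) // ?(@ipZl _ _ _ Hip) //; last by rewrite /is_form rpredZ.
by rewrite h2 mulr0 addr0 !expr2.
Qed.
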